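(* Let $n>0$ and $c>1$. In the no-communication setting, every deterministic algorithm that guarantees rendezvous of the two agents for all initial placements on the cycle of length $n$ has rendezvous time at least $\frac{cn}{c^2-1}$.
   Context: Model: the cycle is the continuous circle $\mathbb{R}/n\mathbb{Z}$ of length $n$; it is anonymous (no marked points). Two agents $A$ and $B$ are placed by an adversary at arbitrary initial points and start at the same time. Both run the same deterministic algorithm; they are identical except for their speeds: the slower agent $B$ has speed $1$ and the faster agent $A$ has speed $c>1$ (an agent does not know whether it is the faster or the slower one). Both agents know $n$ and $c$, have a common sense of direction (clockwise vs. anti-clockwise), and have a pedometer measuring the total distance they have travelled (a ''step'' is one unit of travelled distance, possibly split among directions). At any moment an agent may start moving, continue, stop, or reverse direction; an agent's behaviour is a deterministic function of its own travelled distance (equivalently, its local step count) and of what it has observed so far, so that, absent any observation, an agent of speed $s$ is at real time $t$ where an agent of speed $1$ running the same algorithm would be at time $st$. Agents detect each other when they are at the same point (rendezvous). No-communication setting: the agents cannot observe anything other than the other agent being at their current location (no markers of any kind). The rendezvous time of an algorithm is the worst case, over all initial placements of the two agents, of the time until the agents are co-located. *)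

(* Defs.v *)
(* continuous cycle R/nZ modelled via its universal cover R. *)
From Stdlib Require Import Reals Lra ZArith.
Open Scope R_scope.

(* A deterministic algorithm, in the no-communication setting, is (until
   rendezvous, the only possible observation) a fixed trajectory
   [p : R -> R] : p s is the displacement (in the universal cover R of the
   cycle, positive = clockwise) of an agent after s units of its local
   time / step count.  Since an agent of speed 1 travels at most distance
   |s1 - s2| in local time |s1 - s2|, p is 1-Lipschitz on [0,oo), and
   p 0 = 0.  Only the values of p on [0,oo) matter. *)
Definition algorithm (p : R -> R) : Prop :=
  p 0 = 0 /\
  forall s1 s2, 0 <= s1 -> 0 <= s2 -> Rabs (p s1 - p s2) <= Rabs (s1 - s2).

Definition pos (p : R -> R) (s x t : R) : R := x + p (s * t).

Definition same_point (n : R) (u v : R) : Prop :=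
  exists k : Z, u - v = IZR k * n.

Definition meet (n c : R) (p : R -> R) (a b t : R) : Prop :=
  same_point n (pos p c a t) (pos p 1 b t).

Definition guarantees_rendezvous (n c : R) (p : R -> R) : Prop :=
  forall a b : R, exists t, 0 <= t /\ meet n c p a b t.

Definition first_meeting (n c : R) (p : R -> R) (a b tau : R) : Prop :=
  0 <= tau /\ meet n c p a b tau /\
  forall t, 0 <= t < tau -> ~ meet n c p a b t.

(* The rendezvous time of the algorithm (the supremum over all placements of
   the first meeting time) is at least L: every upper bound M of the set of
   first meeting times satisfies L <= M. *)
Definition rendezvous_time_at_least (n c : R) (p : R -> R) (L : R) : Prop :=
  forall M : R,
    (forall a b tau, first_meeting n c p a b tau -> tau <= M) -> L <= M.

(* Main.v *)
Require Import Defs.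
From Stdlib Require Import Reals Lra Lia ZArith.
Open Scope R_scope.

Lemma inf_ex (E : R -> Prop) (lo : R) (e0 : R) :
  E e0 -> (forall e, E e -> lo <= e) ->
  exists tau, (forall e, E e -> tau <= e) /\
    (forall l, (forall e, E e -> l <= e) -> l <= tau).
Proof.
  intros H0 Hlo.
  destruct (completeness (fun u => E (- u))) as [L [HL1 HL2]].
  - exists (- lo). intros u Hu. specialize (Hlo _ Hu). lra.
  - exists (- e0). now rewrite Ropp_involutive.
  - exists (- L). split.
    + intros e He. assert (- e <= L). { apply HL1. now rewrite Ropp_involutive. } lra.
    + intros l Hl. assert (L <= - l). { apply HL2. intros u Hu. specialize (Hl _ Hu). lra. } lra.
Qed.

Lemma sup_ex (E : R -> Prop) (hi : R) (e0 : R) :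
  E e0 -> (forall e, E e -> e <= hi) ->
  exists m, (forall e, E e -> e <= m) /\
    (forall l, (forall e, E e -> e <= l) -> m <= l).
Proof.
  intros H0 Hhi.
  destruct (completeness E) as [L [HL1 HL2]].
  - exists hi. intros u Hu. auto.
  - eauto.
  - exists L. split; auto.
Qed.

Lemma notZ (k : Z) (n : R) : 0 < n -> - n < IZR k * n < 0 -> False.
Proof.
  intros Hn [H1 H2].
  destruct (Z.le_gt_cases 0 k) as [Hk|Hk].
  - apply IZR_le in Hk. nra.
  - assert (IZR k <= -1) by (apply IZR_le; lia). nra.
Qed.

Lemma Zsplit (k : Z) (n : R) : 0 < n -> IZR k * n <= - n \/ 0 <= IZR k * n.
Proof.
  intros Hn.
  destruct (Z.le_gt_cases 0 k) as [Hk|Hk].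
  - apply IZR_le in Hk. right. nra.
  - assert (IZR k <= -1) by (apply IZR_le; lia). left. nra.
Qed.

Theorem theorem1 (n c : R) (p : R -> R) :
  0 < n -> 1 < c ->
  algorithm p ->
  guarantees_rendezvous n c p ->
  rendezvous_time_at_least n c p (c * n / (c ^ 2 - 1)).
Proof.
  intros Hn Hc [Hp0 Hlip] Hgr M HM.
  set (f := fun t => p (c * t) - p t).
  assert (Hfabs : forall t, 0 <= t -> Rabs (f t) <= (c - 1) * t).
  { intros t Ht. unfold f. eapply Rle_trans. apply Hlip; nra.
    rewrite Rabs_right; nra. }
  assert (Hflip : forall s t, 0 <= s -> 0 <= t -> Rabs (f t - f s) <= (c + 1) * Rabs (t - s)).
  { intros s t Hs Ht. unfold f.
    pose proof (Hlip (c*t) (c*s) ltac:(nra) ltac:(nra)) as A.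
    pose proof (Hlip t s Ht Hs) as B.
    replace (c*t - c*s) with (c*(t-s)) in A by ring.
    rewrite Rabs_mult, (Rabs_right c) in A by lra.
    revert A B. split_Rabs; nra. }
  assert (HM0 : 0 <= M).
  { apply (HM 0 0 0). split; [lra|split].
    - exists 0%Z. unfold Defs.pos. replace (c*0) with 0 by ring. replace (1*0) with 0 by ring. ring.
    - intros t Ht. lra. }
  set (K := (c*c - 1) / c * M).
  assert (HK : forall s t, 0 <= s <= M -> 0 <= t <= M -> Rabs (f t - f s) <= K).
  { assert (Gen : forall s t, 0 <= s <= t -> t <= M -> Rabs (f t - f s) <= K).
    { intros s t Hst HtM.
      pose proof (Hfabs t ltac:(lra)) as A.
      pose proof (Hfabs s ltac:(lra)) as B.
      pose proof (Hflip s t ltac:(lra) ltac:(lra)) as C.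
      rewrite (Rabs_right (t - s)) in C by lra.
      assert (Hb : Rabs (f t - f s) <= (c*c-1)/c * t).
      { assert (Hc0 : 0 < c) by lra.
        apply (Rmult_le_reg_l c); [lra|].
        replace (c * ((c * c - 1) / c * t)) with ((c*c-1)*t) by (field; lra).
        destruct (Rle_lt_dec (c*s) t).
        - assert (Rabs (f t - f s) <= (c-1)*t + (c-1)*s).
          { revert A B. split_Rabs; lra. }
          nra.
        - nra. }
      unfold K. assert (0 <= (c*c-1)/c).
      { apply Rmult_le_pos; [nra|]. apply Rlt_le, Rinv_0_lt_compat; lra. }
      nra. }
    intros s t Hs Ht. destruct (Rle_lt_dec s t).
    - apply Gen; lra.
    - rewrite Rabs_minus_sym. apply Gen; lra. }
  destruct (Rle_lt_dec (c * n / (c ^ 2 - 1)) M) as [ok|Hlt]; [exact ok|exfalso].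
  assert (HKn : K < n).
  { unfold K. assert (Hc0 : 0 < c) by lra. assert (0 < c^2-1) by nra.
    apply (Rmult_lt_compat_l ((c^2-1)/c)) in Hlt.
    2:{ apply Rmult_lt_0_compat; [lra|]. apply Rinv_0_lt_compat; lra. }
    replace ((c ^ 2 - 1) / c * (c * n / (c ^ 2 - 1))) with n in Hlt by (field; lra).
    replace ((c * c - 1) / c * M) with ((c ^ 2 - 1) / c * M) by (unfold Rdiv; ring).
    lra. }
  destruct (sup_ex (fun x => exists t, 0 <= t <= M /\ x = - f t) (K - f 0) (- f 0))
    as [L [HL1 HL2]].
  { exists 0. split; [lra|reflexivity]. }
  { intros e [t [Ht ->]]. pose proof (HK 0 t ltac:(lra) Ht). revert H. split_Rabs; lra. }
  set (m := - L).
  assert (Hrange : forall t, 0 <= t <= M -> m <= f t <= m + K).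
  { intros t Ht. split.
    - assert (- f t <= L) by (apply HL1; eauto). unfold m; lra.
    - assert (L <= K - f t).
      { apply HL2. intros e [s [Hs ->]]. pose proof (HK s t Hs Ht). revert H. split_Rabs; lra. }
      unfold m; lra. }
  set (y := m + K + (n - K) / 2).
  set (g := fun t => f t - y).
  assert (Hg : forall t, 0 <= t <= M -> - n < g t < 0).
  { intros t Ht. pose proof (Hrange t Ht). unfold g, y. lra. }
  assert (Hmeet : forall t, meet n c p (- y) 0 t <-> exists k : Z, g t = IZR k * n).
  { intros t. unfold meet, same_point, Defs.pos, g, f. rewrite Rmult_1_l.
    split; intros [k Hk]; exists k; lra. }
  assert (Hglip : forall s t, 0 <= s -> 0 <= t -> Rabs (g t - g s) <= (c + 1) * Rabs (t - s)).
  { intros s t Hs Ht. unfold g. replace (f t - y - (f s - y)) with (f t - f s) by ring. auto. }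
  destruct (Hgr (- y) 0) as [t0 [Ht0 Hm0]].
  apply Hmeet in Hm0. destruct Hm0 as [k0 Hk0].
  assert (Ht0M : M < t0).
  { destruct (Rle_lt_dec t0 M); auto. exfalso. apply (notZ k0 n Hn). rewrite <- Hk0. apply Hg; lra. }
  set (E := fun t => M <= t /\ (g t <= - n \/ 0 <= g t)).
  destruct (inf_ex E M t0) as [tau [Ht1 Ht2]].
  { split; [lra|]. rewrite Hk0. apply Zsplit; auto. }
  { intros e [He _]; auto. }
  assert (HtauM : M <= tau) by (apply Ht2; intros e [He _]; auto).
  assert (Hbefore : forall t, M <= t < tau -> - n < g t < 0).
  { intros t Ht. destruct (Rle_lt_dec (g t) (- n)) as [h|h].
    { assert (tau <= t) by (apply Ht1; split; lra). lra. }
    destruct (Rle_lt_dec 0 (g t)) as [h'|h'].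
    { assert (tau <= t) by (apply Ht1; split; lra). lra. }
    lra. }
  assert (Hc1 : 0 < c + 1) by lra.
  assert (Hin : - n <= g tau <= 0).
  { destruct (Req_dec tau M) as [e|e].
    { rewrite e. pose proof (Hg M ltac:(lra)). lra. }
    split.
    - destruct (Rle_lt_dec (- n) (g tau)) as [h|h]; auto. exfalso.
      set (d := Rmin (tau - M) ((- n - g tau) / (2 * (c+1)))).
      assert (Hd : 0 < d).
      { unfold d. apply Rmin_pos; [lra|]. apply Rdiv_lt_0_compat; lra. }
      assert (Hd1 : d <= tau - M) by apply Rmin_l.
      assert (Hd2 : d <= (- n - g tau) / (2 * (c+1))) by apply Rmin_r.
      assert (Hgt : - n < g (tau - d) < 0).
      { destruct (Req_dec d (tau - M)) as [e'|e'].
        - replace (tau - d) with M by lra. apply Hg; lra.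
        - apply Hbefore; lra. }
      pose proof (Hglip (tau - d) tau ltac:(lra) ltac:(lra)) as A.
      replace (tau - (tau - d)) with d in A by ring. rewrite (Rabs_right d) in A by lra.
      assert ((c+1) * d <= (- n - g tau)/2).
      { apply (Rmult_le_compat_l (c+1)) in Hd2; [|lra].
        replace ((c + 1) * ((- n - g tau) / (2 * (c + 1)))) with ((- n - g tau)/2) in Hd2 by (field; lra).
        lra. }
      revert A. split_Rabs; lra.
    - destruct (Rle_lt_dec (g tau) 0) as [h|h]; auto. exfalso.
      set (d := Rmin (tau - M) (g tau / (2 * (c+1)))).
      assert (Hd : 0 < d).
      { unfold d. apply Rmin_pos; [lra|]. apply Rdiv_lt_0_compat; lra. }
      assert (Hd1 : d <= tau - M) by apply Rmin_l.
      assert (Hd2 : d <= g tau / (2 * (c+1))) by apply Rmin_r.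
      assert (Hgt : - n < g (tau - d) < 0).
      { destruct (Req_dec d (tau - M)) as [e'|e'].
        - replace (tau - d) with M by lra. apply Hg; lra.
        - apply Hbefore; lra. }
      pose proof (Hglip (tau - d) tau ltac:(lra) ltac:(lra)) as A.
      replace (tau - (tau - d)) with d in A by ring. rewrite (Rabs_right d) in A by lra.
      assert ((c+1) * d <= g tau/2).
      { apply (Rmult_le_compat_l (c+1)) in Hd2; [|lra].
        replace ((c + 1) * (g tau / (2 * (c + 1)))) with (g tau/2) in Hd2 by (field; lra).
        lra. }
      revert A. split_Rabs; lra. }
  assert (Hend : g tau = - n \/ g tau = 0).
  { destruct (Req_dec (g tau) (- n)) as [h|h]; auto.
    destruct (Req_dec (g tau) 0) as [h'|h']; auto. exfalso.
    set (d := Rmin ((g tau + n) / (2 * (c+1))) (- g tau / (2 * (c+1)))).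
    assert (Hd : 0 < d).
    { unfold d. apply Rmin_pos; apply Rdiv_lt_0_compat; lra. }
    assert (Hd1 : d <= (g tau + n) / (2 * (c+1))) by apply Rmin_l.
    assert (Hd2 : d <= - g tau / (2 * (c+1))) by apply Rmin_r.
    assert ((c+1) * d <= (g tau + n)/2).
    { apply (Rmult_le_compat_l (c+1)) in Hd1; [|lra].
      replace ((c + 1) * ((g tau + n) / (2 * (c + 1)))) with ((g tau + n)/2) in Hd1 by (field; lra).
      lra. }
    assert ((c+1) * d <= - g tau/2).
    { apply (Rmult_le_compat_l (c+1)) in Hd2; [|lra].
      replace ((c + 1) * (- g tau / (2 * (c + 1)))) with (- g tau/2) in Hd2 by (field; lra).
      lra. }
    assert (tau + d <= tau).
    { apply Ht2. intros e [He1 He2].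
      destruct (Rle_lt_dec (tau + d) e) as [ok|bad]; auto. exfalso.
      assert (tau <= e) by (apply Ht1; split; auto).
      pose proof (Hglip tau e ltac:(lra) ltac:(lra)) as A.
      assert ((c+1) * Rabs (e - tau) <= (c+1) * d).
      { apply Rmult_le_compat_l; [lra|]. rewrite Rabs_right; lra. }
      revert A He2. split_Rabs; lra. }
    lra. }
  assert (Hfm : first_meeting n c p (- y) 0 tau).
  { split; [lra|split].
    - apply Hmeet. destruct Hend as [h|h]; [exists (-1)%Z | exists 0%Z]; rewrite h; simpl; lra.
    - intros t Ht Hmt. apply Hmeet in Hmt. destruct Hmt as [k Hk].
      apply (notZ k n Hn). rewrite <- Hk.
      destruct (Rle_lt_dec t M).
      + apply Hg; lra.
      + apply Hbefore; lra. }
  pose proof (HM _ _ _ Hfm) as HtM.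
  assert (- n < g tau < 0) by (apply Hg; lra).
  destruct Hend; lra.
Qed.
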